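(* Let $H, W \ge 1$ be integers and $L=HW$. For each $s \in \{0,1,\dots,H+W-2\}$ let $i_{\min}(s)=\max(0,\,s-(W-1))$ and $i_{\max}(s)=\min(s,\,H-1)$. Let $\mathbf{d}^{(s)}$ be the ordered list of points $(i,\,s-i)$ and $\mathbf{a}^{(s)}$ the ordered list of points $(i,\,W-1-(s-i))$, in both cases for $i=i_{\min}(s),\dots,i_{\max}(s)$ in increasing order. Set $\operatorname{diag}(s)=\mathbf{d}^{(s)}$, $\operatorname{antidiag}(s)=\mathbf{a}^{(s)}$ for $s$ even and $\operatorname{diag}(s)=\operatorname{reverse}(\mathbf{d}^{(s)})$, $\operatorname{antidiag}(s)=\operatorname{reverse}(\mathbf{a}^{(s)})$ for $s$ odd. Let $\mathbf{i}_{\text{diag}}$, $\mathbf{i}_{\text{antidiag}}\in\mathbb{Z}^L$ be obtained by concatenating $\operatorname{diag}(s)$, resp. $\operatorname{antidiag}(s)$, over $s=0,\dots,H+W-2$ and replacing each point $(i,j)$ by $iW+j$. Let $\mathbf{I}_{\text{fwd}}\in\mathbb{Z}^{4\times L}$ have rows $\mathbf{i}_{\text{diag}}$, $\mathbf{i}_{\text{antidiag}}$, $\operatorname{flip}(\mathbf{i}_{\text{diag}})$, $\operatorname{flip}(\mathbf{i}_{\text{antidiag}})$ (indexed $k=0,1,2,3$), and let $\mathbf{I}_{\text{inv}}\in\mathbb{Z}^{4\times L}$ be defined by $\mathbf{I}_{\text{inv}}[k,\mathbf{I}_{\text{fwd}}[k,j]]=j$ for all $k\in\{0,1,2,3\}$,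 $j\in\{0,\dots,L-1\}$. Let $\mathbf{z}\in\mathbb{R}^L$ be any vector and for each $k$ define $\mathbf{z}^{\text{scan}}_k\in\mathbb{R}^L$ by $\mathbf{z}^{\text{scan}}_k[j]=\mathbf{z}[\mathbf{I}_{\text{fwd}}[k,j]]$. Then for every $k\in\{0,1,2,3\}$ and every $\ell\in\{0,\dots,L-1\}$, $\mathbf{z}^{\text{scan}}_k[\mathbf{I}_{\text{inv}}[k,\ell]]=\mathbf{z}[\ell]$; that is, $\mathbf{z}^{\text{scan}}_k[\mathbf{I}_{\text{inv}}[k,:]]=\mathbf{z}$.
   Context: The grid is $\{0,\dots,H-1\}\times\{0,\dots,W-1\}$ with points $(i,j)$; $iW+j$ is the row-major (raster) index. $\operatorname{reverse}$ and $\operatorname{flip}$ reverse the order of a finite sequence. Vectors of length $L$ are indexed by $\{0,\dots,L-1\}$, and $\mathbf{v}[\mathbf{u}]$ for an index vector $\mathbf{u}$ denotes the vector with entries $\mathbf{v}[\mathbf{u}[j]]$. *)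

(* Defs.v *)
From mathcomp Require Import all_boot all_order all_algebra.
From mathcomp Require Import reals.
Set Implicit Arguments. Unset Strict Implicit. Unset Printing Implicit Defensive.

(* Grid points (i,j) are pairs of naturals; nat subtraction is truncated, so
   [s - (W-1)] is max(0, s-(W-1)). *)
Definition imin (W s : nat) : nat := s - (W - 1).
Definition imax (H s : nat) : nat := minn s (H - 1).

Definition irange (H W s : nat) : seq nat := iota (imin W s) ((imax H s).+1 - imin W s).

Definition dpts (H W s : nat) : seq (nat * nat) :=
  [seq (i, s - i) | i <- irange H W s].
Definition apts (H W s : nat) : seq (nat * nat) :=
  [seq (i, W - 1 - (s - i)) | i <- irange H W s].

Definition diag (H W s : nat) : seq (nat * nat) :=
  if odd s then rev (dpts H W s) else dpts H W s.
Definition antidiag (H W s : nat) : seq (nat * nat) :=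
  if odd s then rev (apts H W s) else apts H W s.

Definition raster (W : nat) (p : nat * nat) : nat := p.1 * W + p.2.

Definition i_diag (H W : nat) : seq nat :=
  flatten [seq [seq raster W p | p <- diag H W s] | s <- iota 0 (H + W - 1)].
Definition i_antidiag (H W : nat) : seq nat :=
  flatten [seq [seq raster W p | p <- antidiag H W s] | s <- iota 0 (H + W - 1)].

Definition I_fwd (H W k : nat) : seq nat :=
  nth [::] [:: i_diag H W; i_antidiag H W; rev (i_diag H W); rev (i_antidiag H W)] k.

Definition z_scan {R : realType} (H W : nat) (z : seq R) (k : nat) : seq R :=
  [seq nth 0%R z i | i <- I_fwd H W k].

(* Main.v *)
Require Import Defs.
From mathcomp Require Import all_boot all_order all_algebra.
From mathcomp Require Import reals.
From mathcomp Require Import zify.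

Lemma uniq_flat (F : nat -> seq nat) (key : nat -> nat) (ss : seq nat) :
  uniq ss -> (forall s, s \in ss -> uniq (F s)) ->
  (forall s x, s \in ss -> x \in F s -> key x = s) ->
  uniq (flatten [seq F s | s <- ss]).
Proof.
elim: ss => [|a ss IH] //= /andP[ha hu] hF hk.
rewrite cat_uniq hF ?mem_head //= IH //; last first.
- by move=> s x hs; apply: hk; rewrite inE hs orbT.
- by move=> s hs; apply: hF; rewrite inE hs orbT.
rewrite andbT; apply/hasPn => x /flatten_mapP[s hs hx]; apply/negP => hxa.
have e1 := hk a x (mem_head _ _) hxa.
have e2 := hk s x ltac:(by rewrite inE hs orbT) hx.
by move: ha; rewrite -e1 e2 hs.
Qed.

Section Gen.
Variables (H W : nat) (hH : 0 < H) (hW : 0 < W).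
Variables (pt : nat -> nat -> nat * nat) (key : nat -> nat).
Let N := H + W - 1.
Hypothesis hdiv : forall s i, s < N -> i \in irange H W s -> raster W (pt s i) %/ W = i.
Hypothesis hkey : forall s i, s < N -> i \in irange H W s -> key (raster W (pt s i)) = s.
Hypothesis hrng : forall s i, s < N -> i \in irange H W s -> raster W (pt s i) < H * W.
Hypothesis hsur : forall l, l < H * W -> exists s i, [/\ s < N, i \in irange H W s & raster W (pt s i) = l].

Definition LL := flatten [seq [seq raster W p | p <- if odd s then rev (map (pt s) (irange H W s)) else map (pt s) (irange H W s)] | s <- iota 0 N].

Lemma LL_mem x : (x \in LL) = (x < H * W).
Proof.
apply/idP/idP.
- move/flatten_mapP=> [s]; rewrite mem_iota add0n => hs.
  case: ifP => _; rewrite ?map_rev ?mem_rev => /mapP[p /mapP[i hi ->] ->]; exact: hrng.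
- move=> /hsur[s [i [hs hi <-]]]; apply/flatten_mapP; exists s; first by rewrite mem_iota.
  case: ifP => _; rewrite ?map_rev ?mem_rev; apply: map_f; exact: map_f.
Qed.

Lemma LL_uniq : uniq LL.
Proof.
apply: (@uniq_flat _ key); first exact: iota_uniq.
- move=> s; rewrite mem_iota add0n => hs.
  have u : uniq [seq raster W p | p <- map (pt s) (irange H W s)].
    rewrite -map_comp map_inj_in_uniq; first exact: iota_uniq.
    by move=> i j hi hj /= e; rewrite -(hdiv s i hs hi) -(hdiv s j hs hj) e.
  by case: ifP => _ //; rewrite map_rev rev_uniq.
- move=> s x; rewrite mem_iota add0n => hs.
  case: ifP => _; rewrite ?map_rev ?mem_rev => /mapP[p /mapP[i hi ->] ->]; exact: hkey.
Qed.

Lemma LL_size : size LL = H * W.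
Proof.
rewrite -(size_iota 0 (H * W)); apply: perm_size; apply: uniq_perm.
- exact: LL_uniq.
- exact: iota_uniq.
- by move=> x; rewrite LL_mem mem_iota.
Qed.
End Gen.

Lemma rasterE W i j : j < W -> (raster W (i, j)) %/ W = i /\ (raster W (i, j)) %% W = j.
Proof.
move=> hj; rewrite /raster /=; split.
- by rewrite divnMDl ?divn_small ?addn0 //; lia.
- by rewrite modnMDl modn_small.
Qed.

Lemma irangeP H W s i : (i \in irange H W s) = (s - (W - 1) <= i <= minn s (H - 1)).
Proof. rewrite /irange mem_iota /imin /imax. lia. Qed.

Lemma diag_ok H W : 0 < H -> 0 < W ->
  size (i_diag H W) = H * W /\ forall l, l < H * W -> l \in i_diag H W.
Proof.
move=> hH hW.
have E : i_diag H W = LL H W (fun s i => (i, s - i)) by [].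
pose key := fun l => l %/ W + l %% W.
have hdiv : forall s i, s < H + W - 1 -> i \in irange H W s -> raster W (i, s - i) %/ W = i /\ key (raster W (i, s - i)) = s.
  move=> s i hs; rewrite irangeP => hi.
  have [h1 h2] := @rasterE W i (s - i) ltac:(lia).
  by rewrite /key h1 h2; split => //; lia.
have hrng : forall s i, s < H + W - 1 -> i \in irange H W s -> raster W (i, s - i) < H * W.
  move=> s i hs; rewrite irangeP => hi; rewrite /raster /=.
  have : i * W + (s - i) < i.+1 * W by rewrite mulSn; lia.
  move/leq_trans; apply; rewrite leq_mul2r; apply/orP; right; lia.
have hsur : forall l, l < H * W -> exists s i, [/\ s < H + W - 1, i \in irange H W s & raster W (i, s - i) = l].
  move=> l hl; exists (l %/ W + l %% W), (l %/ W).
  have hq : l %/ W < H by rewrite ltn_divLR.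
  have hr : l %% W < W by rewrite ltn_mod.
  rewrite irangeP /raster /=; split; [lia| move: hq hr; generalize (l %/ W) (l %% W) => q r; lia |].
  by rewrite addKn -divn_eq.
rewrite E; split; first exact: (@LL_size H W _ key (fun s i hs hi => proj1 (hdiv s i hs hi)) (fun s i hs hi => proj2 (hdiv s i hs hi))).
by move=> l; rewrite (LL_mem _ _ _ hrng hsur).
Qed.

Lemma antidiag_ok H W : 0 < H -> 0 < W ->
  size (i_antidiag H W) = H * W /\ forall l, l < H * W -> l \in i_antidiag H W.
Proof.
move=> hH hW.
have E : i_antidiag H W = LL H W (fun s i => (i, W - 1 - (s - i))) by [].
pose key := fun l => l %/ W + (W - 1 - l %% W).
have hdiv : forall s i, s < H + W - 1 -> i \in irange H W s -> raster W (i, W - 1 - (s - i)) %/ W = i /\ key (raster W (i, W - 1 - (s - i))) = s.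
  move=> s i hs; rewrite irangeP => hi.
  have [h1 h2] := @rasterE W i (W - 1 - (s - i)) ltac:(lia).
  by rewrite /key h1 h2; split => //; lia.
have hrng : forall s i, s < H + W - 1 -> i \in irange H W s -> raster W (i, W - 1 - (s - i)) < H * W.
  move=> s i hs; rewrite irangeP => hi; rewrite /raster /=.
  have : i * W + (W - 1 - (s - i)) < i.+1 * W by rewrite mulSn; lia.
  move/leq_trans; apply; rewrite leq_mul2r; apply/orP; right; lia.
have hsur : forall l, l < H * W -> exists s i, [/\ s < H + W - 1, i \in irange H W s & raster W (i, W - 1 - (s - i)) = l].
  move=> l hl; exists (l %/ W + (W - 1 - l %% W)), (l %/ W).
  have hq : l %/ W < H by rewrite ltn_divLR.
  have hr : l %% W < W by rewrite ltn_mod.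
  rewrite irangeP /raster /=; split; [lia| move: hq hr; generalize (l %/ W) (l %% W) => q r; lia |].
  rewrite addKn.
  have -> : W - 1 - (W - 1 - l %% W) = l %% W by lia.
  by rewrite -divn_eq.
rewrite E; split; first exact: (@LL_size H W _ key (fun s i hs hi => proj1 (hdiv s i hs hi)) (fun s i hs hi => proj2 (hdiv s i hs hi))).
by move=> l; rewrite (LL_mem _ _ _ hrng hsur).
Qed.

Lemma fwd_ok H W k : 0 < H -> 0 < W -> k < 4 ->
  size (I_fwd H W k) = H * W /\ forall l, l < H * W -> l \in I_fwd H W k.
Proof.
move=> hH hW; have [d1 d2] := diag_ok H W hH hW; have [a1 a2] := antidiag_ok H W hH hW.
case: k => [|[|[|[|k]]]] // _; rewrite /I_fwd /= ?size_rev //; split => // l hl;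
  rewrite ?mem_rev; auto.
Qed.

Theorem mainTheorem3 (R : realType) (H W : nat) (hH : 1 <= H) (hW : 1 <= W)
  (I_inv : nat -> nat -> nat)
  (hinv : forall k j, k < 4 -> j < H * W ->
            I_inv k (nth 0 (I_fwd H W k) j) = j)
  (z : seq R) (hz : size z = H * W) :
  forall k l, k < 4 -> l < H * W ->
    nth 0%R (z_scan H W z k) (I_inv k l) = nth 0%R z l.
Proof.
move=> k l hk hl.
have [hs hm] := fwd_ok H W k hH hW hk.
have hin := hm l hl.
have hj : index l (I_fwd H W k) < H * W by rewrite -hs index_mem.
have e := hinv k _ hk hj; rewrite nth_index // in e.
rewrite e /z_scan (nth_map 0) ?hs // nth_index //.
Qed.
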